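(* Let $D$ be a rank two filtered $(\varphi,N,L/K,E)$-module and let $\underline\eta$ be a standard basis of $D$ (chosen as in Corollary 2.6 when $N\neq0$). Then: (1) If $D$ is F-semisimple and not F-scalar: (a) if $N\neq0$, there is a character $\chi:G\to E^\times$ with $[g]_{\underline\eta}=\mathrm{diag}(\chi(g)\cdot\vec1,\chi(g)\cdot\vec1)$ for all $g\in G$; (b) if $N=0$, there are characters $\chi,\psi:G\to E^\times$ with $[g]_{\underline\eta}=\mathrm{diag}(\chi(g)\cdot\vec1,\psi(g)\cdot\vec1)$ for all $g\in G$. (2) If $D$ is F-scalar, there is a group homomorphism $\lambda:G\to GL_2(E)$ with $[g]_{\underline\eta}=\lambda(g)\cdot\mathrm{diag}(\vec1,\vec1)$ for all $g\in G$ (i.e. the $(r,s)$ entry of $[g]_{\underline\eta}$ is $\lambda(g)_{rs}\cdot\vec1$). (3) If $D$ is non-F-semisimple, there is a character $\chi:G\to E^\times$ with $[g]_{\underline\eta}=\mathrm{diag}(\chi(g)\cdot\vec1,\chi(g)\cdot\vec1)$ for all $g\in G$.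
   Context: $p$ prime; $K/\mathbb{Q}_p$ finite; $L/K$ finite Galois with $G=\mathrm{Gal}(L/K)$; $L_0$ the maximal unramified subextension of $L/\mathbb{Q}_p$, $f=[L_0:\mathbb{Q}_p]$, $\tau$ the absolute Frobenius of $L_0$; $E$ a finite extension of $\mathbb{Q}_p$ containing the images of all embeddings of $L$. Fix $\iota:L_0\hookrightarrow E$ and $\tau_j=\iota\circ\tau^j$; then $L_0\otimes_{\mathbb{Q}_p}E\cong E^f$ via $x\otimes y\mapsto(\tau_j(x)y)_j$, and $\tau\otimes1$ becomes $\varphi(x_0,\dots,x_{f-1})=(x_1,\dots,x_{f-1},x_0)$. For $g\in G$ let $n(g)\in\{0,\dots,f-1\}$ with $g|_{L_0}=\tau^{n(g)}$; $G$ acts on $E^f$ by $g(a_0,\dots,a_{f-1})=(a_{n(g)},a_{n(g)+1},\dots,a_{n(g)+f-1})$ (indices mod $f$). A rank two filtered $(\varphi,N,L/K,E)$-module is a free $E^f$-module $D$ of rank 2 with: an additive bijection $\varphi$ with $\varphi(ad)=\varphi(a)\varphi(d)$; a nilpotent $E^f$-linear $N$ with $N\varphi=p\varphi N$; a decreasing exhaustive separated filtration on $D_L=L\otimes_{L_0}D$; and an $E$-linear action of $G$ on $D$ with $g(ad)=g(a)g(d)$, commuting with $\varphi$ and $N$ and (after extension to $D_L$) preserving the filtration. Matrices: $(T\eta_1,T\eta_2)=(\eta_1,\eta_2)[T]_{\underline\eta}$. $D$ is F-semisimple / F-scalar / non-F-semisimple according as the $E^f$-linear map $\varphi^f$ is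 semisimple / a scalar in $E^\times$ / not semisimple. A standard basis is one in which $[\varphi]$ is $\mathrm{diag}(\alpha\cdot\vec1,\delta\cdot\vec1)$ with $\alpha^f\ne\delta^f$, or $\mathrm{diag}(\alpha\cdot\vec1,\alpha\cdot\vec1)$, or $\begin{pmatrix}\alpha\cdot\vec1&\vec0\\ \vec1&\alpha\cdot\vec1\end{pmatrix}$ ($\alpha,\delta\in E^\times$); when $N\ne0$ it is moreover chosen with $[\varphi]=\mathrm{diag}(p\delta\cdot\vec1,\delta\cdot\vec1)$ and $[N]=\begin{pmatrix}\vec0&\vec0\\ \vec1&\vec0\end{pmatrix}$. $c\cdot\vec1=(c,\dots,c)$. *)

(* Defs.v *)
From HB Require Import structures.
From mathcomp Require Import all_boot all_order all_algebra all_fingroup.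
Set Implicit Arguments. Unset Strict Implicit. Unset Printing Implicit Defensive.
Import Order.TTheory GRing.Theory Num.Theory.
Local Open Scope ring_scope.

(* Coordinate model of a free rank-two E^f-module D with basis (eta_1, eta_2):
   an element  a_1 eta_1 + a_2 eta_2  (a_r in E^f = E x ... x E) is stored as
   the matrix d : 'M[E]_(2, f) with  d r j = j-th component of a_r.
   Elements of E^f are functions 'I_f -> E (componentwise ring structure). *)
Section Model.
Variables (E : fieldType) (f : nat).

Definition Dmod := 'M[E]_(2, f).

(* the shift sigma_k on E^f : (sigma_k a)_j = a_{j+k mod f};
   sigma_1 is phi(x_0,...,x_{f-1}) = (x_1,...,x_{f-1},x_0). *)
Definition shiftEf (k : nat) (a : 'I_f -> E) : 'I_f -> E :=
  fun j => a (insubd j ((j + k) %% f)%N).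

Definition smulD (a : 'I_f -> E) (d : Dmod) : Dmod := \matrix_(r, j) (a j * d r j).

Definition eta (s : 'I_2) : Dmod := \matrix_(r, j) ((r == s)%:R : E).

(* matrix [T]_eta over E^f:  T eta_s = sum_r [T]_{r s} eta_r ;
   matD T r s j = j-th component of [T]_{r s}. *)
Definition matD (T : Dmod -> Dmod) (r s : 'I_2) (j : 'I_f) : E := T (eta s) r j.

Definition semilinD (k : nat) (T : Dmod -> Dmod) : Prop :=
  (forall d1 d2, T (d1 + d2) = T d1 + T d2) /\
  (forall a d, T (smulD a d) = smulD (shiftEf k a) (T d)).

(* Rank two (phi, N, G, E)-module structure on D (filtration omitted).
   The group G is the whole finite group gT; n g in {0..f-1} with
   g|_{L_0} = tau^{n g}; G acts on E^f through shiftEf (n g). *)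
Definition is_phiNG_module (p : nat) (gT : finGroupType) (n : gT -> nat)
    (phi N : Dmod -> Dmod) (act : gT -> Dmod -> Dmod) : Prop :=
  [/\ semilinD 1 phi /\ bijective phi,
      semilinD 0 N /\ (exists k, forall d, iter k N d = 0),
      (forall d, N (phi d) = p%:R *: phi (N d)),
      (forall g, semilinD (n g) (act g)) /\
        (forall d, act 1%g d = d) /\
        (forall g h d, act (g * h)%g d = act g (act h d)) &
      (forall g d, act g (phi d) = phi (act g d)) /\
        (forall g d, act g (N d) = N (act g d))].

Definition invariant_sp (T : Dmod -> Dmod) (U : {vspace Dmod}) : Prop :=
  forall u, u \in U -> T u \in U.

Definition semisimple_endo (T : Dmod -> Dmod) : Prop :=
  forall U : {vspace Dmod}, invariant_sp T U ->
    exists W : {vspace Dmod},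
      [/\ invariant_sp T W, (U :&: W)%VS = 0%VS & (U + W)%VS = fullv].

Definition F_semisimple (phi : Dmod -> Dmod) : Prop := semisimple_endo (iter f phi).

Definition F_scalar (phi : Dmod -> Dmod) : Prop :=
  exists c : E, c != 0 /\ forall d, iter f phi d = c *: d.

Definition Nzero (N : Dmod -> Dmod) : Prop := forall d, N d = 0.

Definition std_diag2 (phi : Dmod -> Dmod) : Prop :=
  exists alpha delta : E, [/\ alpha != 0, delta != 0, alpha ^+ f != delta ^+ f &
    forall r s j, matD phi r s j =
      if r == s then (if r == 0 then alpha else delta) else 0].

Definition std_scalar (phi : Dmod -> Dmod) : Prop :=
  exists alpha : E, alpha != 0 /\
    forall r s j, matD phi r s j = if r == s then alpha else 0.

Definition std_nonss (phi : Dmod -> Dmod) : Prop :=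
  exists alpha : E, alpha != 0 /\
    forall r s j, matD phi r s j =
      if r == s then alpha else if (r == 1) && (s == 0) then 1 else 0.

(* the choice of Corollary 2.6 when N <> 0 *)
Definition std_monodromy (p : nat) (phi N : Dmod -> Dmod) : Prop :=
  exists delta : E, delta != 0 /\
    (forall r s j, matD phi r s j =
        if r == s then (if r == 0 then p%:R * delta else delta) else 0) /\
    (forall r s j, matD N r s j = if (r == 1) && (s == 0) then 1 else 0).

Definition standard_basis (p : nat) (phi N : Dmod -> Dmod) : Prop :=
  (std_diag2 phi \/ std_scalar phi \/ std_nonss phi) /\
  (~ Nzero N -> std_monodromy p phi N).

End Model.

Definition is_character (E : fieldType) (gT : finGroupType) (chi : gT -> E) : Prop :=
  (forall g, chi g != 0) /\ (forall g h, chi (g * h)%g = chi g * chi h).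

Definition is_GL2_hom (E : fieldType) (gT : finGroupType) (lam : gT -> 'M[E]_2) : Prop :=
  (forall g, lam g \in unitmx) /\ (forall g h, lam (g * h)%g = lam g *m lam h).

(* Main.v *)
Require Import Defs.
From HB Require Import structures.
From mathcomp Require Import all_boot all_order all_algebra all_fingroup.
Import Order.TTheory GRing.Theory Num.Theory.
Local Open Scope ring_scope.
Set Implicit Arguments. Unset Strict Implicit.

Lemma ord2E (r : 'I_2) : r = 0 \/ r = 1.
Proof. by case: r => [[|[|//]]] Hr; [left|right]; apply/val_inj. Qed.

Lemma sum2 (E : fieldType) (F : 'I_2 -> E) : \sum_s F s = F 0 + F 1.
Proof. by rewrite big_ord_recr big_ord_recr big_ord0 /= add0r; congr (F _ + F _); apply/val_inj. Qed.

Lemma deltaE (E : fieldType) (f : nat) (i : 'I_2) (d : 'M[E]_(2, f)) r j :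
  (delta_mx i i *m d) r j = if r == i then d i j else 0.
Proof.
rewrite mxE sum2 !mxE.
by case: (ord2E r) => ->; case: (ord2E i) => -> /=; rewrite ?mul1r ?mul0r ?addr0 ?add0r.
Qed.

Lemma rowscale_ss (E : fieldType) (f : nat) (a b : E) (T : Dmod E f -> Dmod E f) :
  (forall d r j, T d r j = (if r == 0 then a else b) * d r j) -> semisimple_endo T.
Proof.
move=> HT U HU.
case: (eqVneq a b) => [eab|hab]; first subst b.
  have Ta : forall w, T w = a *: w.
    by move=> w; apply/matrixP=> r j; rewrite HT mxE; case: (r == 0).
  exists (U^C)%VS; split; last by rewrite addv_complf.
    by move=> w hw; rewrite Ta memvZ.
  by rewrite capv_compl.
pose V0 : {vspace Dmod E f} := lker (linfun (mulmx (delta_mx 1 1 : 'M[E]_2))).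
pose V1 : {vspace Dmod E f} := lker (linfun (mulmx (delta_mx 0 0 : 'M[E]_2))).
have memV0 : forall v, v \in V0 -> forall j, v 1 j = 0.
  move=> v; rewrite memv_ker lfunE /= => /eqP /matrixP H j.
  by have := H 1 j; rewrite deltaE mxE.
have memV1 : forall v, v \in V1 -> forall j, v 0 j = 0.
  move=> v; rewrite memv_ker lfunE /= => /eqP /matrixP H j.
  by have := H 0 j; rewrite deltaE mxE.
have inV0 : forall v : Dmod E f, (forall j, v 1 j = 0) -> v \in V0.
  move=> v Hv; rewrite memv_ker lfunE /=; apply/eqP/matrixP => r j.
  by rewrite deltaE mxE; case: ifP => // /eqP ->; rewrite Hv.
have inV1 : forall v : Dmod E f, (forall j, v 0 j = 0) -> v \in V1.
  move=> v Hv; rewrite memv_ker lfunE /=; apply/eqP/matrixP => r j.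
  by rewrite deltaE mxE; case: ifP => // /eqP ->; rewrite Hv.
have hab' : a - b != 0 by rewrite subr_eq0.
have hba' : b - a != 0 by rewrite subr_eq0 eq_sym.
pose P0 (d : Dmod E f) : Dmod E f := delta_mx 0 0 *m d.
pose P1 (d : Dmod E f) : Dmod E f := delta_mx 1 1 *m d.
have P0U : forall u, u \in U -> P0 u \in U.
  move=> u hu.
  have -> : P0 u = (a - b)^-1 *: (T u - b *: u).
    apply/matrixP => r j; rewrite deltaE !mxE HT.
    case: (ord2E r) => -> /=.
      by rewrite -mulrBl mulrA mulVf // mul1r.
    by rewrite subrr mulr0.
  by rewrite memvZ // memvB // ?HU // memvZ.
have P1U : forall u, u \in U -> P1 u \in U.
  move=> u hu.
  have -> : P1 u = (b - a)^-1 *: (T u - a *: u).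
    apply/matrixP => r j; rewrite deltaE !mxE HT.
    case: (ord2E r) => -> /=.
      by rewrite subrr mulr0.
    by rewrite -mulrBl mulrA mulVf // mul1r.
  by rewrite memvZ // memvB // ?HU // memvZ.
have sub0 := subvP (diffvSl V0 U).
have sub1 := subvP (diffvSl V1 U).
exists ((V0 :\: U) + (V1 :\: U))%VS; split.
- move=> w hw; have [w0 h0 [w1 h1 ew]] := elimT (@memv_addP _ _ w (V0 :\: U)%VS (V1 :\: U)%VS) hw; rewrite ew.
  have z0 := memV0 _ (sub0 _ h0); have z1 := memV1 _ (sub1 _ h1).
  have -> : T (w0 + w1) = a *: w0 + b *: w1.
    apply/matrixP => r j; rewrite HT !mxE.
    by case: (ord2E r) => -> /=; rewrite ?z0 ?z1 ?mulr0 ?addr0 ?add0r.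
  by apply: memv_add; apply: memvZ.
- apply/eqP; rewrite -subv0; apply/subvP => x /memv_capP [xU xW]; have [w0 h0 [w1 h1 ex]] := elimT (@memv_addP _ _ x (V0 :\: U)%VS (V1 :\: U)%VS) xW.
  have z0 := memV0 _ (sub0 _ h0); have z1 := memV1 _ (sub1 _ h1).
  have e0 : P0 x = w0.
    apply/matrixP => r j; rewrite deltaE ex !mxE.
    by case: (ord2E r) => -> /=; rewrite ?z0 ?z1 ?addr0.
  have e1 : P1 x = w1.
    apply/matrixP => r j; rewrite deltaE ex !mxE.
    by case: (ord2E r) => -> /=; rewrite ?z0 ?z1 ?add0r.
  have w00 : w0 = 0.
    apply/eqP; rewrite -memv0 -(capv_diff V0 U); apply/memv_capP; split => //.
    by rewrite -e0 P0U.
  have w10 : w1 = 0.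
    apply/eqP; rewrite -memv0 -(capv_diff V1 U); apply/memv_capP; split => //.
    by rewrite -e1 P1U.
  by rewrite memv0 ex w00 w10 addr0.
- apply/eqP; rewrite eqEsubv subvf /=; apply/subvP => d _.
  have h0 : P0 d \in V0 by apply: inV0 => j; rewrite deltaE.
  have h1 : P1 d \in V1 by apply: inV1 => j; rewrite deltaE.
  rewrite -(addv_diff_cap V0 U) in h0; rewrite -(addv_diff_cap V1 U) in h1.
  case/memv_addP: h0 => a0 ha0 [c0 /memv_capP [_ hc0] e0].
  case/memv_addP: h1 => a1 ha1 [c1 /memv_capP [_ hc1] e1].
  have -> : d = (c0 + c1) + (a0 + a1).
    apply/matrixP => r j.
    have := congr1 (fun m : Dmod E f => m r j) e0.
    have := congr1 (fun m : Dmod E f => m r j) e1.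
    rewrite /= !deltaE !mxE.
    case: (ord2E r) => -> /= H1 H2.
    - by rewrite addrACA (addrC (c0 0 j)) (addrC (c1 0 j)) -H1 addr0 H2.
    - by rewrite addrACA (addrC (c0 1 j)) (addrC (c1 1 j)) -H2 add0r H1.
  by apply: memv_add; [apply: memvD | apply: memv_add].
Qed.

Definition sh {f : nat} (k : nat) (j : 'I_f) : 'I_f := insubd j ((j + k) %% f)%N.

Lemma sh_val f k (j : 'I_f) : val (sh k j) = ((j + k) %% f)%N.
Proof.
rewrite /sh val_insubd ltn_pmod //.
by apply: leq_ltn_trans (ltn_ord j).
Qed.

Lemma sh0 f (j : 'I_f) : sh 0 j = j.
Proof. by apply/val_inj; rewrite sh_val addn0 modn_small. Qed.

Lemma sh_add f k m (j : 'I_f) : sh m (sh k j) = sh (k + m) j.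
Proof. by apply/val_inj; rewrite !sh_val modnDml addnA. Qed.

Lemma shf f (j : 'I_f) : sh f j = j.
Proof. by apply/val_inj; rewrite sh_val modnDr modn_small. Qed.

Lemma sh_from0 f (j : 'I_f) : sh j (insubd j 0%N) = j.
Proof.
have f0 : (0 < f)%N by apply: leq_ltn_trans (ltn_ord j).
apply/val_inj; rewrite sh_val val_insubd f0 add0n modn_small //.
Qed.

Lemma const_shift (E : fieldType) f (c : 'I_f -> E) :
  (forall j, c (sh 1 j) = c j) -> forall j j', c j = c j'.
Proof.
move=> H.
have Hk : forall k j, c (sh k j) = c j.
  elim=> [|k IH] j; first by rewrite sh0.
  by rewrite -addn1 -sh_add H IH.
have H0 : forall j j0 : 'I_f, val j0 = 0%N -> c j = c j0.
  move=> j j0 h0; rewrite -{1}(Hk j j0); congr c; apply/val_inj.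
  by rewrite sh_val h0 add0n modn_small.
move=> j j'.
have f0 : (0 < f)%N by apply: leq_ltn_trans (ltn_ord j).
rewrite (H0 j (Ordinal f0)) // (H0 j' (Ordinal f0)) //.
Qed.

Lemma twist_zero (E : fieldType) f (x : 'I_f -> E) (a b : E) :
  (0 < f)%N -> a ^+ f != b ^+ f ->
  (forall j, a * x j = b * x (sh 1 j)) -> forall j, x j = 0.
Proof.
move=> f0 hab H.
have Hk : forall k j, a ^+ k * x j = b ^+ k * x (sh k j).
  elim=> [|k IH] j; first by rewrite sh0 !mul1r.
  by rewrite exprSr -mulrA H mulrCA IH mulrA -exprS sh_add add1n.
move=> j; have := Hk f j; rewrite shf => /eqP; rewrite -subr_eq0 -mulrBl mulf_eq0 subr_eq0.
by rewrite (negbTE hab) /= => /eqP.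
Qed.

Lemma twist_add (E : fieldType) f (x : 'I_f -> E) (a c : E) :
  (0 < f)%N -> [pchar E] =i pred0 -> a != 0 ->
  (forall j, a * x j = c + a * x (sh 1 j)) -> c = 0 /\ forall j j', x j = x j'.
Proof.
move=> f0 hch ha H.
have Hk : forall k j, a * x j = k%:R * c + a * x (sh k j).
  elim=> [|k IH] j; first by rewrite sh0 mul0r add0r.
  by rewrite IH H sh_add addn1 addrA -natr1 mulrDl mul1r.
have c0 : c = 0.
  have := Hk f (Ordinal f0); rewrite shf => /eqP.
  rewrite eq_sym -subr_eq0 addrK mulf_eq0 => /orP [|/eqP //].
  by move/pcharf0P: hch => -> /eqP f00; move: f0; rewrite f00.
split=> //; apply: const_shift => j.
by apply/(mulfI ha); rewrite [RHS]H c0 add0r.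
Qed.

Lemma semil_rep (E : fieldType) (f k : nat) (T : Dmod E f -> Dmod E f) :
  semilinD k T -> forall d r j,
  T d r j = \sum_s d s (sh k j) * matD T r s j.
Proof.
move=> [Hadd Hsm] d r j.
have Hd : d = smulD (fun j => d 0 j) (Defs.eta E f 0) + smulD (fun j => d 1 j) (Defs.eta E f 1).
  apply/matrixP => r' j'; rewrite !mxE.
  by case: (ord2E r') => ->; rewrite /= ?mulr1 ?mulr0 ?addr0 ?add0r.
by rewrite {1}Hd Hadd !Hsm sum2 !mxE.
Qed.

Lemma comm_mat (E : fieldType) f m1 m2 (T1 T2 : Dmod E f -> Dmod E f) :
  semilinD m1 T1 -> semilinD m2 T2 -> (forall d, T1 (T2 d) = T2 (T1 d)) ->
  forall r s j, \sum_t matD T2 t s (sh m1 j) * matD T1 r t j =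
                \sum_t matD T1 t s (sh m2 j) * matD T2 r t j.
Proof.
move=> h1 h2 H r s j.
have := congr1 (fun M : Dmod E f => M r j) (H (Defs.eta E f s)).
by rewrite /= (semil_rep h1 (T2 _)) (semil_rep h2 (T1 _)).
Qed.

Lemma comp_mat (E : fieldType) f m1 (T1 T2 T : Dmod E f -> Dmod E f) :
  semilinD m1 T1 -> (forall d, T d = T1 (T2 d)) ->
  forall r s j, matD T r s j = \sum_t matD T2 t s (sh m1 j) * matD T1 r t j.
Proof. by move=> h1 H r s j; rewrite /matD H (semil_rep h1 (T2 _)). Qed.

Lemma diag_case (E : fieldType) f m (A phi : Dmod E f -> Dmod E f) (a b : E) :
  (0 < f)%N -> [pchar E] =i pred0 -> a != 0 -> b != 0 -> a ^+ f != b ^+ f ->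
  semilinD m A -> semilinD 1 phi -> (forall d, A (phi d) = phi (A d)) ->
  (forall r s j, matD phi r s j = if r == s then (if r == 0 then a else b) else 0) ->
  (forall r s j j', matD A r s j = matD A r s j') /\
  (forall j, matD A 0 1 j = 0 /\ matD A 1 0 j = 0).
Proof.
move=> f0 hch ha hb hab hA hphi hc HP.
have C := comm_mat hA hphi hc.
have e : forall r s j, matD A r s j * (if s == 0 then a else b) =
                       matD A r s (sh 1 j) * (if r == 0 then a else b).
  move=> r s j; have := C r s j; rewrite !sum2 !HP.
  by case: (ord2E r) => ->; case: (ord2E s) => -> /=;
    rewrite ?mulr0 ?mul0r ?addr0 ?add0r ?(mulrC a) ?(mulrC b).
have z01 : forall j, matD A 0 1 j = 0.
  apply: (twist_zero (a:=b) (b:=a)) => //; first by rewrite eq_sym.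
  by move=> j; have := e 0 1 j; rewrite /= mulrC => ->; rewrite mulrC.
have z10 : forall j, matD A 1 0 j = 0.
  apply: (twist_zero (a:=a) (b:=b)) => //.
  by move=> j; have := e 1 0 j; rewrite /= mulrC => ->; rewrite mulrC.
split; last by move=> j; rewrite z01 z10.
move=> r s j j'.
case: (ord2E r) => ->; case: (ord2E s) => ->; rewrite ?z01 ?z10 //.
- apply: (proj2 (@twist_add _ _ (fun i => matD A 0 0 i) a 0 f0 hch ha _)) => i; have := e 0 0 i; rewrite /= add0r.
  by rewrite mulrC => ->; rewrite mulrC.
- apply: (proj2 (@twist_add _ _ (fun i => matD A 1 1 i) b 0 f0 hch hb _)) => i; have := e 1 1 i; rewrite /= add0r.
  by rewrite mulrC => ->; rewrite mulrC.
Qed.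

Lemma nonss_case (E : fieldType) f m (A phi : Dmod E f -> Dmod E f) (a : E) :
  (0 < f)%N -> [pchar E] =i pred0 -> a != 0 ->
  semilinD m A -> semilinD 1 phi -> (forall d, A (phi d) = phi (A d)) ->
  (forall r s j, matD phi r s j =
      if r == s then a else if (r == 1) && (s == 0) then 1 else 0) ->
  (forall r s j j', matD A r s j = matD A r s j') /\
  (forall j, matD A 0 1 j = 0 /\ matD A 1 1 j = matD A 0 0 j).
Proof.
move=> f0 hch ha hA hphi hc HP.
have C := comm_mat hA hphi hc.
pose ord0' := Ordinal f0.
have S := fun r s j => C r s j.
have Cs : forall r s j, \sum_t matD phi t s (sh m j) * matD A r t j =
                        \sum_t matD A t s (sh 1 j) * matD phi r t j by [].
have E01 : forall j, a * matD A 0 1 j = 0 + a * matD A 0 1 (sh 1 j).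
  move=> j; move: (C 0 1 j); rewrite !sum2 !HP /= !(mulr0, mul0r, addr0, add0r, mulr1, mul1r).
  by move=> ->; rewrite mulrC.
have [_ K01] := @twist_add _ _ (fun i => matD A 0 1 i) a 0 f0 hch ha E01.
have E11 : forall j, a * matD A 1 1 j = matD A 0 1 ord0' + a * matD A 1 1 (sh 1 j).
  move=> j; move: (C 1 1 j); rewrite !sum2 !HP /= !(mulr0, mul0r, addr0, add0r, mulr1, mul1r).
  by move=> ->; rewrite mulrC (K01 (sh 1 j) ord0').
have [c0 K11] := @twist_add _ _ (fun i => matD A 1 1 i) a _ f0 hch ha E11.
have Z01 : forall j, matD A 0 1 j = 0 by move=> j; rewrite (K01 j ord0') c0.
have E00 : forall j, a * matD A 0 0 j = 0 + a * matD A 0 0 (sh 1 j).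
  move=> j; move: (C 0 0 j); rewrite !sum2 !HP /= !(mulr0, mul0r, addr0, add0r, mulr1, mul1r).
  by rewrite Z01 addr0 => ->; rewrite mulrC.
have [_ K00] := @twist_add _ _ (fun i => matD A 0 0 i) a 0 f0 hch ha E00.
have E10 : forall j, a * matD A 1 0 j =
    (matD A 0 0 ord0' - matD A 1 1 ord0') + a * matD A 1 0 (sh 1 j).
  move=> j; move: (C 1 0 j); rewrite !sum2 !HP /= !(mulr0, mul0r, addr0, add0r, mulr1, mul1r).
  move=> h; rewrite -[LHS](addrK (matD A 1 1 j)) h.
  by rewrite (K00 (sh 1 j) ord0') (K11 j ord0') addrAC mulrC.
have [c1 K10] := @twist_add _ _ (fun i => matD A 1 0 i) a _ f0 hch ha E10.
split.
  move=> r s j j'.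
  by case: (ord2E r) => ->; case: (ord2E s) => ->; [apply: K00|apply: K01|apply: K10|apply: K11].
move=> j; split; first exact: Z01.
by rewrite (K11 j ord0') (K00 j ord0'); apply/eqP; rewrite eq_sym -subr_eq0 c1.
Qed.

Lemma scalar_case (E : fieldType) f m (A phi : Dmod E f -> Dmod E f) (a : E) :
  (0 < f)%N -> [pchar E] =i pred0 -> a != 0 ->
  semilinD m A -> semilinD 1 phi -> (forall d, A (phi d) = phi (A d)) ->
  (forall r s j, matD phi r s j = if r == s then a else 0) ->
  (forall r s j j', matD A r s j = matD A r s j').
Proof.
move=> f0 hch ha hA hphi hc HP r s.
have E0 : forall j, a * matD A r s j = 0 + a * matD A r s (sh 1 j).
  move=> j.
  have C := comm_mat hA hphi hc.
  move: (C r s j); rewrite !sum2 !HP.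
  by case: (ord2E r) => ->; case: (ord2E s) => -> /=;
    rewrite !(mulr0, mul0r, addr0, add0r) => ->; rewrite mulrC.
exact: (proj2 (@twist_add _ _ (fun i => matD A r s i) a 0 f0 hch ha E0)).
Qed.

Lemma iter_diag (E : fieldType) f (phi : Dmod E f -> Dmod E f) (a b : E) :
  semilinD 1 phi ->
  (forall r s j, matD phi r s j = if r == s then (if r == 0 then a else b) else 0) ->
  forall k d r j, iter k phi d r j = (if r == 0 then a else b) ^+ k * d r (sh k j).
Proof.
move=> hphi HP; elim=> [|k IH] d r j; first by rewrite expr0 mul1r sh0.
rewrite iterS (semil_rep hphi) sum2 !HP !IH sh_add add1n.
by case: (ord2E r) => -> /=; rewrite ?mulr0 ?addr0 ?add0r exprS mulrC mulrA.
Qed.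

Lemma hom_of_const (E : fieldType) f (gT : finGroupType) (n : gT -> nat)
    (act : gT -> Dmod E f -> Dmod E f) (M : gT -> 'M[E]_2) :
  (0 < f)%N -> (forall g, semilinD (n g) (act g)) -> (forall d, act 1%g d = d) ->
  (forall g h d, act (g * h)%g d = act g (act h d)) ->
  (forall g r s j, matD (act g) r s j = M g r s) ->
  M 1%g = 1 /\ is_GL2_hom M.
Proof.
move=> f0 hact h1 hM HM.
pose j0 := Ordinal f0.
have M1 : M 1%g = 1.
  apply/matrixP => r s; rewrite -(HM _ r s j0) /matD h1 !mxE.
  by rewrite eq_sym.
have MM : forall g h, M (g * h)%g = M g *m M h.
  move=> g h; apply/matrixP => r s.
  rewrite -(HM _ r s j0) (comp_mat (hact g) (hM g h)) mxE.
  by apply: eq_bigr => t _; rewrite !HM mulrC.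
split=> //; split=> // g.
have /mulmx1_unit [] // : M g *m M (g^-1)%g = 1%:M.
by rewrite -MM mulgV M1.
Qed.

Lemma char_lower (E : fieldType) (gT : finGroupType) (M : gT -> 'M[E]_2) :
  M 1%g = 1 -> is_GL2_hom M -> (forall g, M g 0 1 = 0) ->
  is_character (fun g => M g 0 0) /\ is_character (fun g => M g 1 1).
Proof.
move=> M1 [_ MM] Z.
have m00 : forall g h, M (g * h)%g 0 0 = M g 0 0 * M h 0 0.
  by move=> g h; rewrite MM mxE sum2 Z mul0r addr0.
have m11 : forall g h, M (g * h)%g 1 1 = M g 1 1 * M h 1 1.
  by move=> g h; rewrite MM mxE sum2 Z mulr0 add0r.
split; split=> // g; apply/eqP => hg.
- have := m00 g (g^-1)%g; rewrite mulgV M1 hg mul0r mxE /=.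
  by move/eqP; rewrite oner_eq0.
- have := m11 g (g^-1)%g; rewrite mulgV M1 hg mul0r mxE /=.
  by move/eqP; rewrite oner_eq0.
Qed.

Lemma kill_unipotent (E : fieldType) (gT : finGroupType) (M : gT -> 'M[E]_2) :
  [pchar E] =i pred0 ->
  M 1%g = 1 -> is_GL2_hom M -> (forall g, M g 0 1 = 0) ->
  (forall g, M g 1 1 = M g 0 0) -> forall g, M g 1 0 = 0.
Proof.
move=> hch M1 hom Z D.
have [[nz _] _] := char_lower M1 hom Z.
have MM := hom.2.
pose u g := M g 1 0 / M g 0 0.
have uM : forall g h, u (g * h)%g = u g + u h.
  move=> g h; rewrite /u MM !mxE !sum2 Z !D mul0r addr0 mulrDl invfM.
  by rewrite (mulrACA (M g 1 0)) (mulrACA (M g 0 0)) mulfV ?nz // mulfV ?nz // mulr1 mul1r.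
have u1 : u 1%g = 0 by rewrite /u M1 !mxE /= mul0r.
have uX : forall g k, u (g ^+ k)%g = k%:R * u g.
  move=> g; elim=> [|k IH]; first by rewrite expg0 u1 mul0r.
  by rewrite expgS uM IH -natr1 mulrDl mul1r addrC.
move=> g; have := uX g #[g]%g; rewrite expg_order u1 => /esym /eqP.
rewrite mulf_eq0 => /orP [|].
  by move/pcharf0P: hch => -> /eqP o0; have := order_gt0 g; rewrite o0.
rewrite /u mulf_eq0 invr_eq0 (negbTE (nz g)) orbF => /eqP //.
Qed.

Lemma pf_neq (E : fieldType) (p f : nat) (d : E) :
  prime p -> [pchar E] =i pred0 -> (0 < f)%N -> d != 0 ->
  (p%:R * d) ^+ f != d ^+ f.
Proof.
move=> hp hch f0 hd; apply/eqP => h.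
have hdf : d ^+ f != 0 by rewrite expf_neq0.
have : (p ^ f)%:R = (1 : E).
  by apply: (mulIf hdf); rewrite mul1r natrX -exprMn.
move=> h'.
have : ((p ^ f - 1)%:R : E) == 0.
  by rewrite natrB ?expn_gt0 ?prime_gt0 // h' subr_eq0.
move/pcharf0P: hch => -> ; rewrite subn_eq0.
have : (p ^ 1 <= p ^ f)%N.
  apply: leq_pexp2l; [exact: prime_gt0|exact: f0].
move=> h1 h2; have := leq_trans (prime_gt1 hp) (leq_trans h1 h2).
by [].
Qed.

Unset Implicit Arguments.

Theorem proposition2p7 (E : fieldType) (p f : nat) (gT : finGroupType)
  (n : gT -> nat) (phi N : Dmod E f -> Dmod E f) (act : gT -> Dmod E f -> Dmod E f) :
  prime p -> [pchar E] =i pred0 -> (0 < f)%N ->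
  (forall g, (n g < f)%N) -> (forall g h, n (g * h)%g = ((n g + n h) %% f)%N) ->
  is_phiNG_module p n phi N act ->
  standard_basis p phi N ->
  (* (1) F-semisimple, not F-scalar *)
  (F_semisimple phi -> ~ F_scalar phi ->
     (~ Nzero N -> exists chi : gT -> E, is_character chi /\
        forall g r s j, matD (act g) r s j = if r == s then chi g else 0) /\
     (Nzero N -> exists chi psi : gT -> E, is_character chi /\ is_character psi /\
        forall g r s j, matD (act g) r s j =
          if r == s then (if r == 0 then chi g else psi g) else 0)) /\
  (* (2) F-scalar *)
  (F_scalar phi -> exists lam : gT -> 'M[E]_2, is_GL2_hom lam /\
        forall g r s j, matD (act g) r s j = lam g r s) /\
  (* (3) non-F-semisimple *)
  (~ F_semisimple phi -> exists chi : gT -> E, is_character chi /\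
        forall g r s j, matD (act g) r s j = if r == s then chi g else 0).
Proof.
move=> hp hch f0 hn hnM [[hphi _] [hN _] _ [hact [hact1 hactM]] [hcphi hcN]] [hstd hmono].
pose j0 := Ordinal f0.
have mkM : (forall g r s j j', matD (act g) r s j = matD (act g) r s j') ->
   exists M : gT -> 'M[E]_2, forall g r s j, matD (act g) r s j = M g r s.
  move=> K; exists (fun g => \matrix_(r, s) matD (act g) r s j0) => g r s j.
  by rewrite mxE (K g r s j j0).
have FSdiag : forall a b : E, a ^+ f != b ^+ f ->
    (forall r s j, matD phi r s j = if r == s then (if r == 0 then a else b) else 0) ->
    ~ F_scalar phi.
  move=> a b hab HP [c [_ Hc]].
  have e0 := congr1 (fun M : Dmod E f => M 0 j0) (Hc (Defs.eta E f 0)).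
  have e1 := congr1 (fun M : Dmod E f => M 1 j0) (Hc (Defs.eta E f 1)).
  rewrite /= (iter_diag hphi HP) !mxE /= !mulr1 in e0.
  rewrite /= (iter_diag hphi HP) !mxE /= !mulr1 in e1.
  by move/eqP: hab; rewrite e0 e1.
have SSdiag : forall a b : E,
    (forall r s j, matD phi r s j = if r == s then (if r == 0 then a else b) else 0) ->
    F_semisimple phi.
  move=> a b HP; rewrite /F_semisimple.
  apply: (@rowscale_ss E f (a ^+ f) (b ^+ f)) => d r j.
  by rewrite (iter_diag hphi HP) shf; case: (r == 0).
have scal_diag : forall a : E, (forall r s j, matD phi r s j = if r == s then a else 0) ->
    (forall r s j, matD phi r s j = if r == s then (if r == 0 then a else a) else 0).
  by move=> a HP r s j; rewrite HP; case: (r == 0).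
have FSscal : std_scalar phi -> F_scalar phi.
  case=> a [ha HP]; exists (a ^+ f); split; first by rewrite expf_neq0.
  move=> d; apply/matrixP=> r j; rewrite (iter_diag hphi (scal_diag a HP)) shf mxE.
  by case: (r == 0).
have Dcase : forall a b : E, a != 0 -> b != 0 -> a ^+ f != b ^+ f ->
    (forall r s j, matD phi r s j = if r == s then (if r == 0 then a else b) else 0) ->
    exists M : gT -> 'M[E]_2, (M 1%g = 1 /\ is_GL2_hom M) /\
      (forall g r s j, matD (act g) r s j = M g r s) /\
      (forall g, M g 0 1 = 0 /\ M g 1 0 = 0).
  move=> a b ha hb hab HP.
  have DC := fun g => diag_case f0 hch ha hb hab (hact g) hphi (hcphi g) HP.
  have [M HM] := mkM (fun g => (DC g).1).
  exists M; split; first exact: hom_of_const f0 hact hact1 hactM HM.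
  split=> // g; rewrite -!(HM g _ _ j0); exact: (DC g).2 j0.
have Ncase : std_nonss phi ->
    exists M : gT -> 'M[E]_2, (M 1%g = 1 /\ is_GL2_hom M) /\
      (forall g r s j, matD (act g) r s j = M g r s) /\
      (forall g, M g 0 1 = 0 /\ M g 1 0 = 0 /\ M g 1 1 = M g 0 0).
  case=> a [ha HP].
  have NC := fun g => nonss_case f0 hch ha (hact g) hphi (hcphi g) HP.
  have [M HM] := mkM (fun g => (NC g).1).
  have [M1 hom] := hom_of_const f0 hact hact1 hactM HM.
  have Z : forall g, M g 0 1 = 0 by move=> g; rewrite -(HM g _ _ j0); exact: ((NC g).2 j0).1.
  have D : forall g, M g 1 1 = M g 0 0 by move=> g; rewrite -!(HM g _ _ j0); exact: ((NC g).2 j0).2.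
  exists M; split=> //; split=> // g; split=> //; split=> //.
  exact: kill_unipotent hch M1 hom Z D g.
have Scase : std_scalar phi ->
    exists M : gT -> 'M[E]_2, is_GL2_hom M /\
      (forall g r s j, matD (act g) r s j = M g r s).
  case=> a [ha HP].
  have SC := fun g => scalar_case f0 hch ha (hact g) hphi (hcphi g) HP.
  have [M HM] := mkM SC.
  by exists M; split=> //; have [] := hom_of_const f0 hact hact1 hactM HM.
have diag1 : forall M : gT -> 'M[E]_2, M 1%g = 1 -> is_GL2_hom M ->
    (forall g r s j, matD (act g) r s j = M g r s) ->
    (forall g, M g 0 1 = 0 /\ M g 1 0 = 0 /\ M g 1 1 = M g 0 0) ->
    exists chi : gT -> E, is_character chi /\
        forall g r s j, matD (act g) r s j = if r == s then chi g else 0.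
  move=> M M1 hom HM Z; exists (fun g => M g 0 0); split.
    by have [] := char_lower M1 hom (fun g => (Z g).1).
  move=> g r s j; rewrite HM; have [z1 [z2 z3]] := Z g.
  by case: (ord2E r) => ->; case: (ord2E s) => ->.
split; last split.
- move=> hss hnfs; split.
  + move=> hNz; have [d [hd [HPm HNm]]] := hmono hNz.
    have hp0 : (p%:R : E) != 0 by move/pcharf0P: hch => ->; rewrite -lt0n prime_gt0.
    have [M [[M1 hom] [HM Z]]] := Dcase _ _ (mulf_neq0 hp0 hd) hd (pf_neq hp hch f0 hd) HPm.
    apply: (diag1 M M1 hom HM) => g; have [z1 z2] := Z g; split=> //; split=> //.
    have := comm_mat (hact g) hN (hcN g) 1 0 j0.
    rewrite !sum2 !HNm /= !HM !(mulr0, mul0r, addr0, add0r, mulr1, mul1r).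
    by [].
  + move=> _; case: hstd => [[a [b [ha hb hab HP]]]|[hs|hn']].
    * have [M [[M1 hom] [HM Z]]] := Dcase a b ha hb hab HP.
      have [c1 c2] := char_lower M1 hom (fun g => (Z g).1).
      exists (fun g => M g 0 0), (fun g => M g 1 1); split=> //; split=> //.
      move=> g r s j; rewrite HM; have [z1 z2] := Z g.
      by case: (ord2E r) => ->; case: (ord2E s) => ->.
    * by case: hnfs; apply: FSscal.
    * have [M [[M1 hom] [HM Z]]] := Ncase hn'.
      have [chi [hchi Hchi]] := diag1 M M1 hom HM Z.
      exists chi, chi; split=> //; split=> //.
      by move=> g r s j; rewrite Hchi; case: (r == s) => //; case: (r == 0).
- move=> hfs; case: hstd => [[a [b [ha hb hab HP]]]|[hs|hn']].
  + by case: (FSdiag a b hab HP hfs).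
  + have [M [hom HM]] := Scase hs; by exists M.
  + have [M [[M1 hom] [HM Z]]] := Ncase hn'; by exists M.
- move=> hnss; case: hstd => [[a [b [ha hb hab HP]]]|[hs|hn']].
  + by case: hnss; apply: (SSdiag a b HP).
  + by case: hnss; case: hs => a [ha HP]; apply: (SSdiag a a (scal_diag a HP)).
  + have [M [[M1 hom] [HM Z]]] := Ncase hn'.
    exact: diag1 M M1 hom HM Z.
Qed.
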